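(* Let $S$ be a finite set, $R$ a commutative ring with $1$, $q\in R$, and $\mathfrak M\subseteq 2^S$ an arbitrary set system. Then the ideal $I_q(\mathfrak M)$ of $A=R\langle t_s\mid s\in S\rangle$, and hence the algebra $D_q(\mathfrak M)=A/I_q(\mathfrak M)$, does not depend on the choice of the total order on $S$ used to define it.
   Context: Given a total order $<$ on $S$: for $J=\{j_1<\dots<j_{\#J}\}\subseteq S$, $t_J=t_{j_1}\cdots t_{j_{\#J}}$; for $I=\{j_{\alpha_1}<\dots<j_{\alpha_{\#I}}\}\subseteq J$, $\ell_J(I)=\sum_{\nu}(\alpha_\nu-\nu)$; $\tau^-_J=\sum_{I\subseteq J,\ \#I\text{ odd}}(-1)^{\ell_J(I)}(-q)^{(\#I-1)/2}t_{J\setminus I}$. $I_q(\mathfrak M)$ is the two-sided ideal of $A$ generated by $t_s^2-q$ ($s\in S$), $t_rt_s+t_st_r-2q$ ($r,s\in S$, $s<r$), and $\tau^-_J$ ($J\in\mathfrak M$); all of $t_J$, $\ell_J$, $\tau^-_J$ depend on the order. *)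

(* Defs.v *)
From mathcomp Require Import all_boot all_order all_algebra.
Set Implicit Arguments. Unset Strict Implicit. Unset Printing Implicit Defensive.
Import Order.TTheory GRing.Theory.
Local Open Scope ring_scope.

(* The free associative algebra A = R<t_s | s in S> (S finite) is modelled as
   the set of functions  f : seq S -> R  (coefficient of each word) of bounded
   support length (= finite support, since S is finite).  Word w = [:: s1;..;sk]
   stands for the monomial t_{s1} ... t_{sk}. *)

Section FreeAlg.
Variables (S : finType) (R : comPzRingType).

Definition ncpoly := seq S -> R.

Definition is_ncpoly (f : ncpoly) : Prop :=
  exists n : nat, forall w : seq S, (n <= size w)%N -> f w = 0.

Definition nc_const (c : R) : ncpoly := fun w => if w == [::] then c else 0.
Definition nc_mono (u : seq S) : ncpoly := fun w => (w == u)%:R.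
Definition nc_add (f g : ncpoly) : ncpoly := fun w => f w + g w.
Definition nc_opp (f : ncpoly) : ncpoly := fun w => - f w.
Definition nc_scale (c : R) (f : ncpoly) : ncpoly := fun w => c * f w.
Definition nc_mul (f g : ncpoly) : ncpoly :=
  fun w => \sum_(i < (size w).+1) f (take i w) * g (drop i w).
Definition nc_sum (I : finType) (P : pred I) (F : I -> ncpoly) : ncpoly :=
  fun w => \sum_(i | P i) F i w.

Inductive in_ideal (G : ncpoly -> Prop) : ncpoly -> Prop :=
| ideal_gen f : G f -> in_ideal G f
| ideal_zero : in_ideal G (nc_const 0)
| ideal_add f g : in_ideal G f -> in_ideal G g -> in_ideal G (nc_add f g)
| ideal_lmul a f : is_ncpoly a -> in_ideal G f -> in_ideal G (nc_mul a f)
| ideal_rmul f a : is_ncpoly a -> in_ideal G f -> in_ideal G (nc_mul f a).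

Definition total_order (le : rel S) : Prop :=
  [/\ forall x y, le x y || le y x,
      forall x y, le x y -> le y x -> x = y &
      forall x y z, le x y -> le y z -> le x z].

Definition lt_of (le : rel S) : rel S := fun x y => (x != y) && le x y.

Definition sorted_set (le : rel S) (J : {set S}) : seq S := sort le (enum J).

Definition tJ (le : rel S) (J : {set S}) : ncpoly := nc_mono (sorted_set le J).

(* l_J(I) = sum_nu (alpha_nu - nu), where I = {j_{alpha_1} < ... < j_{alpha_#I}}
   (for i = j_{alpha_nu}: alpha_nu - 1 = index of i in sorted J and
   nu - 1 = index of i in sorted I). *)
Definition ellJ (le : rel S) (J I : {set S}) : nat :=
  let sJ := sorted_set le J in
  let sI := sorted_set le I in
  (\sum_(i <- sI) (index i sJ - index i sI))%N.

Definition tau_minus (q : R) (le : rel S) (J : {set S}) : ncpoly :=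
  nc_sum (fun I : {set S} => (I \subset J) && odd #|I|)
    (fun I => nc_scale ((-1) ^+ ellJ le J I * (- q) ^+ ((#|I| - 1) %/ 2))
                       (tJ le (J :\: I))).

Definition Iq_gens (q : R) (M : {set {set S}}) (le : rel S) (f : ncpoly) : Prop :=
  (exists s : S, f = nc_add (nc_mono [:: s; s]) (nc_opp (nc_const q)))
  \/ (exists r s : S, lt_of le s r /\
        f = nc_add (nc_add (nc_mono [:: r; s]) (nc_mono [:: s; r]))
                   (nc_opp (nc_const (2%:R * q))))
  \/ (exists J : {set S}, J \in M /\ f = tau_minus q le J).

Definition Iq (q : R) (M : {set {set S}}) (le : rel S) (f : ncpoly) : Prop :=
  in_ideal (Iq_gens q M le) f.

End FreeAlg.

(* Main.v *)
Require Import Defs.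
From mathcomp Require Import all_boot all_order all_algebra.
From Stdlib Require Import FunctionalExtensionality.
From mathcomp Require Import ring.
Set Implicit Arguments. Unset Strict Implicit. Unset Printing Implicit Defensive.
Import Order.TTheory GRing.Theory.
Local Open Scope ring_scope.

Section Proof.
Variables (S : finType) (R : comPzRingType).
Implicit Types (f g h : ncpoly S R) (w v u : seq S).

Definition Lx (x : S) (f : ncpoly S R) : ncpoly S R :=
  fun w => match w with [::] => 0 | a :: w' => (a == x)%:R * f w' end.

Lemma nc_mul_const c f : nc_mul (nc_const c) f = nc_scale c f.
Proof.
apply: functional_extensionality => w; rewrite /nc_mul /nc_scale /nc_const.
rewrite big_ord_recl /= take0 drop0 eqxx big1 ?addr0 // => i _.
by case: w i => [|a w] [i Hi] //=; rewrite mul0r.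
Qed.

Lemma nc_mul_mono_cons x u f :
  nc_mul (nc_mono R (x :: u)) f = Lx x (nc_mul (nc_mono R u) f).
Proof.
apply: functional_extensionality => w; rewrite /nc_mul /nc_mono /Lx.
case: w => [|a w] /=.
  by rewrite big_ord_recl big_ord0 /= mul0r addr0.
rewrite big_ord_recl /= mul0r add0r mulr_sumr; apply: eq_bigr => i _.
by rewrite /bump /= add0n eqseq_cons -mulnb natrM mulrA.
Qed.

Lemma nc_mul_mono_nil f : nc_mul (nc_mono R [::]) f = f.
Proof.
apply: functional_extensionality => w; rewrite /nc_mul /nc_mono.
rewrite big_ord_recl /= take0 drop0 eqxx mul1r big1 ?addr0 // => i _.
by case: w i => [|a w] [i Hi] //=; rewrite mul0r.
Qed.

Lemma nc_mul_L x f : nc_mul (nc_mono R [:: x]) f = Lx x f.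
Proof. by rewrite nc_mul_mono_cons nc_mul_mono_nil. Qed.

Lemma is_nc_const c : is_ncpoly (nc_const (S:=S) (R:=R) c).
Proof. by exists 1%N => -[|a w]. Qed.

Lemma is_nc_mono u : is_ncpoly (nc_mono R u).
Proof.
exists (size u).+1 => w Hw; rewrite /nc_mono.
case: eqP Hw => // -> ; by rewrite ltnn.
Qed.

Lemma is_nc_add f g : is_ncpoly f -> is_ncpoly g -> is_ncpoly (nc_add f g).
Proof.
move=> [n Hn] [m Hm]; exists (n + m)%N => w Hw; rewrite /nc_add Hn ?Hm ?addr0 //.
  exact: leq_trans (leq_addl _ _) Hw.
exact: leq_trans (leq_addr _ _) Hw.
Qed.

Lemma is_nc_scale c f : is_ncpoly f -> is_ncpoly (nc_scale c f).
Proof. by move=> [n Hn]; exists n => w Hw; rewrite /nc_scale Hn ?mulr0. Qed.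

Lemma is_nc_opp f : is_ncpoly f -> is_ncpoly (nc_opp f).
Proof. by move=> [n Hn]; exists n => w Hw; rewrite /nc_opp Hn ?oppr0. Qed.

Lemma is_nc_eq f g : is_ncpoly f -> f =1 g -> is_ncpoly g.
Proof. by move=> [n Hn] E; exists n => w Hw; rewrite -E Hn. Qed.

Lemma is_nc_L x f : is_ncpoly f -> is_ncpoly (Lx x f).
Proof. by move=> [n Hn]; exists n.+1 => -[|a w] //= Hw; rewrite Hn ?mulr0. Qed.

Section Ideal.
Variable G : ncpoly S R -> Prop.

Lemma ideal_ext f g : f =1 g -> in_ideal G f -> in_ideal G g.
Proof. by move=> /functional_extensionality ->. Qed.

Lemma ideal_eq f g : in_ideal G f -> f =1 g -> in_ideal G g.
Proof. by move=> H E; apply: ideal_ext E H. Qed.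

Lemma ideal_scale c f : in_ideal G f -> in_ideal G (nc_scale c f).
Proof. by move=> H; rewrite -nc_mul_const; apply: ideal_lmul => //; apply: is_nc_const. Qed.

Lemma ideal_L x f : in_ideal G f -> in_ideal G (Lx x f).
Proof. by move=> H; rewrite -nc_mul_L; apply: ideal_lmul => //; apply: is_nc_mono. Qed.

Lemma ideal_opp f : in_ideal G f -> in_ideal G (nc_opp f).
Proof.
move=> /(ideal_scale (-1)); apply: ideal_ext => w.
by rewrite /nc_scale /nc_opp mulN1r.
Qed.

Lemma ideal_0 f : f =1 (fun _ => 0) -> in_ideal G f.
Proof. by move=> H; apply: ideal_ext (@ideal_zero _ _ G) => w; rewrite H /nc_const; case: ifP. Qed.

Lemma ideal_mono (G' : ncpoly S R -> Prop) f :
  (forall g, G g -> G' g) -> in_ideal G f -> in_ideal G' f.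
Proof.
move=> HG; elim=> {f} [f /HG|||a f Ha _ IH|f a Ha _ IH].
- exact: ideal_gen.
- exact: ideal_zero.
- by move=> f g _ Hf _ Hg; apply: ideal_add.
- exact: ideal_lmul.
- exact: ideal_rmul.
Qed.
End Ideal.

Lemma Lx_sub_scale x f g c w :
  Lx x (fun v => f v - c * g v) w = Lx x f w - c * Lx x g w.
Proof. by case: w => [|a w] /=; rewrite ?mulr0 ?subr0 // mulrBr mulrCA. Qed.

Lemma Lx_sub x f g w :
  Lx x (fun v => f v - g v) w = Lx x f w - Lx x g w.
Proof. by case: w => [|a w] /=; rewrite ?mulr0 ?subr0 // mulrBr. Qed.

Lemma nc_mul_addl f g h : nc_mul (nc_add f g) h = nc_add (nc_mul f h) (nc_mul g h).
Proof.
apply: functional_extensionality => w; rewrite /nc_mul /nc_add -big_split /=.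
by apply: eq_bigr => i _; rewrite mulrDl.
Qed.

Lemma nc_mul_oppl f h : nc_mul (nc_opp f) h = nc_opp (nc_mul f h).
Proof.
apply: functional_extensionality => w; rewrite /nc_mul /nc_opp -sumrN /=.
by apply: eq_bigr => i _; rewrite mulNr.
Qed.

Variable q : R.

Fixpoint EO (w : seq S) : ncpoly S R * ncpoly S R :=
  match w with
  | [::] => (nc_const 1, nc_const 0)
  | x :: w' => ((fun v => Lx x (EO w').1 v - q * (EO w').2 v),
                (fun v => (EO w').1 v - Lx x (EO w').2 v))
  end.

Lemma is_nc_EO w : is_ncpoly (EO w).1 /\ is_ncpoly (EO w).2.
Proof.
elim: w => [|x w [H1 H2]] /=; first by split; apply: is_nc_const.
split.
  apply: (is_nc_eq (is_nc_add (is_nc_L x H1) (is_nc_scale (-q) H2))).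
  by move=> v; rewrite /nc_add /nc_scale mulNr.
by apply: (is_nc_eq (is_nc_add H1 (is_nc_opp (is_nc_L x H2)))).
Qed.

Definition Qg (f : ncpoly S R) : Prop :=
  (exists s, f = nc_add (nc_mono R [:: s; s]) (nc_opp (nc_const q)))
  \/ (exists r s, r != s /\
        f = nc_add (nc_add (nc_mono R [:: r; s]) (nc_mono R [:: s; r]))
                   (nc_opp (nc_const (2%:R * q)))).

Definition gxy x y : ncpoly S R :=
  nc_add (nc_add (nc_mono R [:: x; y]) (nc_mono R [:: y; x]))
                   (nc_opp (nc_const (2%:R * q))).

Lemma gxy_in x y : in_ideal Qg (gxy x y).
Proof.
case: (eqVneq x y) => [<-|nxy]; last by apply: ideal_gen; right; exists x, y.
have H : in_ideal Qg (nc_add (nc_mono R [:: x; x]) (nc_opp (nc_const q))).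
  by apply: ideal_gen; left; exists x.
apply: (ideal_eq (ideal_add H H)) => w.
rewrite /gxy /nc_add /nc_opp /nc_const; case: ifP => _; last by rewrite !subr0.
by rewrite mulr_natl mulr2n opprD !addrA; congr (_ + _); rewrite -!addrA; congr (_ + _); rewrite addrC.
Qed.

Lemma swapE x y w :
  (fun v => (EO [:: x, y & w]).1 v + (EO [:: y, x & w]).1 v) = nc_mul (gxy x y) (EO w).1.
Proof.
apply: functional_extensionality => v.
rewrite /gxy !nc_mul_addl nc_mul_oppl nc_mul_const !nc_mul_mono_cons !nc_mul_mono_nil.
rewrite /= /nc_add /nc_opp /nc_scale !Lx_sub_scale.
set e := (EO w).1; set o := (EO w).2.
rewrite mulr_natl mulr2n mulrDl opprD !mulrBr !opprB.
ring.
Qed.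

Lemma swapO x y w :
  (fun v => (EO [:: x, y & w]).2 v + (EO [:: y, x & w]).2 v) = nc_mul (gxy x y) (EO w).2.
Proof.
apply: functional_extensionality => v.
rewrite /gxy !nc_mul_addl nc_mul_oppl nc_mul_const !nc_mul_mono_cons !nc_mul_mono_nil.
rewrite /= /nc_add /nc_opp /nc_scale !Lx_sub.
rewrite mulr_natl mulr2n; ring.
Qed.

Definition Dr w1 w2 (b : bool) :=
  in_ideal Qg (fun v => (EO w1).1 v - (-1) ^+ b * (EO w2).1 v) /\
  in_ideal Qg (fun v => (EO w1).2 v - (-1) ^+ b * (EO w2).2 v).

Lemma Dr_refl w : Dr w w false.
Proof. by split; apply: ideal_0 => v; rewrite expr0 mul1r subrr. Qed.

Lemma Dr_cons x w1 w2 b : Dr w1 w2 b -> Dr (x :: w1) (x :: w2) b.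
Proof.
move=> [H1 H2]; split.
  apply: (ideal_eq (ideal_add (ideal_L x H1) (ideal_scale (-q) H2))) => v.
  rewrite /nc_add /nc_scale /= Lx_sub_scale; ring.
apply: (ideal_eq (ideal_add H1 (ideal_opp (ideal_L x H2)))) => v.
rewrite /nc_add /nc_opp /= Lx_sub_scale; ring.
Qed.

Lemma Dr_trans w1 w2 w3 b c : Dr w1 w2 b -> Dr w2 w3 c -> Dr w1 w3 (b (+) c).
Proof.
have E : (-1) ^+ (b (+) c) = (-1) ^+ b * (-1) ^+ c :> R.
  by rewrite -signr_addb.
move=> [H1 H2] [K1 K2]; split.
  apply: (ideal_eq (ideal_add H1 (ideal_scale ((-1) ^+ b) K1))) => v.
  rewrite /nc_add /nc_scale E; ring.
apply: (ideal_eq (ideal_add H2 (ideal_scale ((-1) ^+ b) K2))) => v.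
rewrite /nc_add /nc_scale E; ring.
Qed.

Lemma Dr_swap x y w : Dr [:: x, y & w] [:: y, x & w] true.
Proof.
have [E O] := is_nc_EO w.
split.
  apply: (ideal_eq (ideal_rmul E (gxy_in x y))) => v.
  by rewrite -swapE expr1 mulN1r opprK.
apply: (ideal_eq (ideal_rmul O (gxy_in x y))) => v.
by rewrite -swapO expr1 mulN1r opprK.
Qed.

Lemma Dr_move x a c : exists b, Dr (x :: a ++ c) (a ++ x :: c) b.
Proof.
elim: a => [|y a [b IH]] /=; first by exists false; apply: Dr_refl.
exists (true (+) b); apply: Dr_trans (Dr_swap _ _ _) _.
exact: Dr_cons.
Qed.

Lemma Dr_perm w1 w2 : perm_eq w1 w2 -> exists b, Dr w1 w2 b.
Proof.
elim: w1 w2 => [|x w1 IH] w2.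
  by rewrite perm_sym => /perm_nilP ->; exists false; apply: Dr_refl.
move=> Hp; have /splitPr Hs : x \in w2 by rewrite -(perm_mem Hp) mem_head.
case: Hs Hp => a c Hp.
have Hp' : perm_eq w1 (a ++ c).
  by rewrite -(perm_cons x); apply: (perm_trans Hp); rewrite -[x :: c]cat1s perm_catCA.
have [b Hb] := IH _ Hp'; have [b' Hb'] := Dr_move x a c.
by exists (b (+) b'); apply: Dr_trans (Dr_cons x Hb) Hb'.
Qed.

Definition ellS (s : seq S) (I : {set S}) : nat :=
  (\sum_(i <- [seq y <- s | y \in I]) (index i s - index i [seq y <- s | y \in I]))%N.

Definition cf (s : seq S) (I : {set S}) : R :=
  (-1) ^+ ellS s I * (- q) ^+ (#|I| %/ 2).

Definition tauS (b : bool) (s : seq S) : ncpoly S R :=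
  fun w => \sum_(I : {set S} | (I \subset [set:: s]) && (odd #|I| == b))
             cf s I * nc_mono R [seq y <- s | y \notin I] w.

Lemma index_filter_le (p : pred S) s i : p i -> (index i [seq y <- s | p y] <= index i s)%N.
Proof.
move=> pi; elim: s => [|y s IH] //=.
case: ifP => py /=; first by case: eqP.
case: eqP => [E|_]; [by move: pi; rewrite -E py | exact: leqW].
Qed.

Lemma split_sub (x : S) (X : {set S}) (P : pred {set S}) (F : {set S} -> R) :
  x \notin X ->
  \sum_(I : {set S} | (I \subset x |: X) && P I) F I =
  \sum_(I : {set S} | (I \subset X) && P I) F I +
  \sum_(I : {set S} | (I \subset X) && P (x |: I)) F (x |: I).
Proof.
move=> Hx; rewrite (bigID (fun I : {set S} => x \in I)) /= addrC; congr (_ + _).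
  apply: eq_bigl => I; rewrite -{2}(setU1K Hx) subsetD1.
  by case: (I \subset x |: X); case: (P I); case: (x \in I).
rewrite (reindex_onto (fun I : {set S} => x |: I) (fun I : {set S} => I :\ x)); last first.
  by move=> I /andP[_ HI]; rewrite setD1K.
apply: eq_bigl => I; rewrite setU11 andbT.
case Hxi: (x \in I).
  have -> : (I \subset X) = false.
    by apply/negP => /subsetP/(_ x Hxi); rewrite (negbTE Hx).
  have -> : ((x |: I) :\ x == I) = false.
    by apply/negbTE/eqP => E; move: Hxi; rewrite -E !inE eqxx.
  by rewrite andbF.
rewrite (setU1K (negbT Hxi)) eqxx andbT.
have -> : (x |: I \subset x |: X) = (I \subset X).
  rewrite subUset sub1set setU11 /= -{2}(setU1K Hx) subsetD1 Hxi andbT.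
  by [].
by [].
Qed.

Implicit Types (s : seq S) (I : {set S}) (x : S).

Lemma in_setseq (y : S) s : (y \in [set:: s]) = (y \in s).
Proof. by rewrite inE. Qed.

Lemma notin_I x s I : x \notin s -> I \subset [set:: s] -> x \notin I.
Proof. by move=> xs HI; apply/negP => /(subsetP HI); rewrite in_setseq (negbTE xs). Qed.

Lemma ell_notin x s I : uniq (x :: s) -> I \subset [set:: s] ->
  ellS (x :: s) I = (#|I| + ellS s I)%N.
Proof.
move=> /andP[xs us] HI; have xI := notin_I xs HI.
rewrite /ellS /= (negbTE xI).
set f := [seq y <- s | y \in I].
have -> : #|I| = size f.
  rewrite -(elimT card_uniqP (filter_uniq _ us)); apply: eq_card => y.
  rewrite mem_filter; case Hy: (y \in I) => //=.
  by have := subsetP HI y Hy; rewrite in_setseq.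
rewrite -sum1_size -big_split /=; apply: eq_big_seq => i.
rewrite mem_filter => /andP[iI iS].
have -> : (x == i) = false by apply/negbTE; apply: contraNneq xs => ->.
by rewrite subSn // index_filter_le.
Qed.

Lemma ell_in x s I : uniq (x :: s) -> I \subset [set:: s] ->
  ellS (x :: s) (x |: I) = ellS s I.
Proof.
move=> /andP[xs us] HI.
have Ef : [seq y <- s | y \in x |: I] = [seq y <- s | y \in I].
  apply: eq_in_filter => y ys; rewrite in_setU1.
  by have -> : (y == x) = false by apply/negbTE; apply: contraNneq xs => <-.
rewrite /ellS /= setU11 Ef big_cons /= eqxx subnn add0n.
apply: eq_big_seq => i; rewrite mem_filter => /andP[iI iS].
have -> : (x == i) = false by apply/negbTE; apply: contraNneq xs => ->.
by rewrite subSS.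
Qed.

Lemma filt_notin x s I : x \notin s -> I \subset [set:: s] ->
  [seq y <- x :: s | y \notin I] = x :: [seq y <- s | y \notin I].
Proof. by move=> xs HI; rewrite /= (notin_I xs HI). Qed.

Lemma filt_notinU x s I : x \notin s ->
  [seq y <- x :: s | y \notin x |: I] = [seq y <- s | y \notin I].
Proof.
move=> xs; rewrite /= setU11 /=; apply: eq_in_filter => y ys; rewrite in_setU1.
by have -> : (y == x) = false by apply/negbTE; apply: contraNneq xs => <-.
Qed.

Lemma mono_cons x u w : nc_mono R (x :: u) w = Lx x (nc_mono R u) w.
Proof. by case: w => [|a w] //=; rewrite /nc_mono eqseq_cons -mulnb natrM. Qed.

Lemma Lx_sum x (P : pred {set S}) (c : {set S} -> R) (F : {set S} -> ncpoly S R) w :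
  Lx x (fun w => \sum_(I | P I) c I * F I w) w = \sum_(I | P I) c I * Lx x (F I) w.
Proof.
case: w => [|a w] /=; first by rewrite big1 // => I _; rewrite mulr0.
by rewrite mulr_sumr; apply: eq_bigr => I _; rewrite mulrCA.
Qed.

Lemma cf_notin x s I : uniq (x :: s) -> I \subset [set:: s] ->
  cf (x :: s) I = (-1) ^+ (odd #|I|) * cf s I.
Proof. by move=> us HI; rewrite /cf ell_notin // exprD signr_odd mulrA. Qed.

Lemma cf_in x s I : uniq (x :: s) -> I \subset [set:: s] ->
  cf (x :: s) (x |: I) = (- q) ^+ (odd #|I|) * cf s I.
Proof.
move=> us HI; have xI := notin_I (proj1 (andP us)) HI.
rewrite /cf ell_in // cardsU1 xI add1n !divn2 /= uphalf_half exprD.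
by rewrite mulrCA.
Qed.

Lemma odd_U x I b : x \notin I -> (odd #|x |: I| == b) = (odd #|I| == ~~ b).
Proof. by move=> xI; rewrite cardsU1 xI add1n /=; case: (odd _); case: b. Qed.

Lemma EO_tau s : uniq s -> (EO s).1 = tauS false s /\ (EO s).2 = tauS true s.
Proof.
elim: s => [_|x s IH us].
  split; apply: functional_extensionality => w; rewrite /tauS /= set_nil.
    rewrite (big_pred1 set0); last first.
      by move=> I; rewrite subset0 /=; case: eqP => // ->; rewrite cards0.
    rewrite /cf /ellS big_nil cards0 /= !mul1r /nc_mono /nc_const.
    by case: (w == [::]).
  rewrite big_pred0 /nc_const ?if_same // => I.
  by rewrite subset0 /=; case: eqP => // ->; rewrite cards0.
have [xs us'] := andP us; have [H1 H2] := IH us'.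
have xX : x \notin [set:: s] by rewrite in_setseq.
split; apply: functional_extensionality => w; rewrite /= H1 H2 /tauS set_cons split_sub //.
- rewrite Lx_sum -mulNr mulr_sumr; congr (_ + _).
    apply: eq_bigr => I /andP[HI Hodd].
    by rewrite filt_notin // mono_cons cf_notin // (eqP Hodd) expr0 mul1r.
  apply: eq_big => [I|I /andP[HI Hodd]].
    by case HI: (I \subset [set:: s]) => //=; rewrite odd_U // (notin_I xs HI).
  rewrite filt_notinU // cf_in //.
  by rewrite (eqP Hodd) expr1 mulrA.
- rewrite Lx_sum -sumrN addrC; congr (_ + _).
    apply: eq_bigr => I /andP[HI Hodd].
    by rewrite filt_notin // mono_cons cf_notin // (eqP Hodd) expr1 mulN1r mulNr.
  apply: eq_big => [I|I /andP[HI Hodd]].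
    by case HI: (I \subset [set:: s]) => //=; rewrite odd_U // (notin_I xs HI).
  rewrite filt_notinU // cf_in //.
  by rewrite (eqP Hodd) expr0 mul1r.
Qed.

Section Order.
Variable le : rel S.
Hypothesis Hle : total_order le.

Lemma le_total : total le.
Proof. by case: Hle. Qed.
Lemma le_trans : transitive le.
Proof. by case: Hle => _ _ H x y z Hyx Hxz; exact: H Hyx Hxz. Qed.
Lemma le_anti : antisymmetric le.
Proof. by case: Hle => _ H _ x y /andP[]; exact: H. Qed.

Lemma sorted_filt (J A : {set S}) (p : pred S) :
  (forall y, (y \in A) = p y && (y \in J)) ->
  sorted_set le A = [seq y <- sorted_set le J | p y].
Proof.
move=> HA; apply: (sorted_eq le_trans le_anti).
- exact: (sort_sorted le_total).
- exact: (sorted_filter le_trans _ (sort_sorted le_total _)).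
apply: uniq_perm.
- by rewrite sort_uniq enum_uniq.
- by rewrite filter_uniq // sort_uniq enum_uniq.
by move=> y; rewrite mem_filter !mem_sort !mem_enum HA.
Qed.

Lemma tau_EO (J : {set S}) : tau_minus q le J = (EO (sorted_set le J)).2.
Proof.
have us : uniq (sorted_set le J) by rewrite sort_uniq enum_uniq.
rewrite (proj2 (EO_tau us)); apply: functional_extensionality => w.
have HJ : [set:: sorted_set le J] = J.
  by apply/setP => y; rewrite in_setseq mem_sort mem_enum.
rewrite /tau_minus /tauS /nc_sum HJ; apply: eq_big => [I|I /andP[HI Hodd]]; first by rewrite eqb_id.
have E1 : sorted_set le I = [seq y <- sorted_set le J | y \in I].
  apply: sorted_filt => y; case Hy: (y \in I) => //=.
  by rewrite (subsetP HI y Hy).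
have E2 : sorted_set le (J :\: I) = [seq y <- sorted_set le J | y \notin I].
  by apply: sorted_filt => y; rewrite inE.
rewrite /nc_scale /tJ E2 /cf /ellJ /ellS E1; congr (_ * (_ ^+ _) * _).
move: Hodd; case: #|I| => // n /= Hn; rewrite subSS subn0 !divn2 /=.
by rewrite uphalf_half (negbTE Hn).
Qed.

Lemma Qg_gens M f : Qg f -> Iq_gens q M le f.
Proof.
case=> [H|[r [s [nrs Hf]]]]; first by left.
right; left; case/orP: (le_total s r) => Hsr.
  by exists r, s; split => //; rewrite /lt_of eq_sym nrs.
exists s, r; split; first by rewrite /lt_of nrs.
rewrite Hf; apply: functional_extensionality => w; rewrite /nc_add.
by congr (_ + _); rewrite addrC.
Qed.
End Order.

Lemma perm_sort_both (le1 le2 : rel S) (J : {set S}) :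
  perm_eq (sorted_set le1 J) (sorted_set le2 J).
Proof. by rewrite /sorted_set perm_sort perm_sym perm_sort. Qed.

Lemma ideal_sub (G1 G2 : ncpoly S R -> Prop) f :
  (forall g, G1 g -> in_ideal G2 g) -> in_ideal G1 f -> in_ideal G2 f.
Proof.
move=> HG; elim=> {f} [f /HG //|||a f Ha _ IH|f a Ha _ IH].
- exact: ideal_zero.
- by move=> f g _ Hf _ Hg; apply: ideal_add.
- exact: ideal_lmul.
- exact: ideal_rmul.
Qed.

Lemma one_dir M le1 le2 f : total_order le1 -> total_order le2 ->
  Iq q M le1 f -> Iq q M le2 f.
Proof.
move=> H1 H2; apply: ideal_sub => g.
case=> [Hg|[Hg|[J [JM ->]]]].
- by apply: ideal_gen; apply: Qg_gens => //; left.
- apply: ideal_gen; apply: Qg_gens => //; right.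
  case: Hg => r [s [/andP[Hsr _] ->]]; exists r, s; split => //.
  by rewrite eq_sym.
have [b [_ Hb]] := Dr_perm (perm_sort_both le1 le2 J).
have Ht2 : in_ideal (Iq_gens q M le2) (tau_minus q le2 J).
  by apply: ideal_gen; right; right; exists J.
have HQ := @ideal_mono _ (Iq_gens q M le2) _ (fun g Hg => Qg_gens H2 M Hg) Hb.
apply: (ideal_eq (ideal_add HQ (ideal_scale ((-1) ^+ b) Ht2))) => v.
by rewrite /nc_add /nc_scale (tau_EO H1) (tau_EO H2) subrK.
Qed.
End Proof.

Theorem proposition4p1 (S : finType) (R : comPzRingType) (q : R)
    (M : {set {set S}}) (le1 le2 : rel S) :
  total_order le1 -> total_order le2 ->
  forall f : ncpoly S R, Iq q M le1 f <-> Iq q M le2 f.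
Proof. by move=> H1 H2 f; split; apply: one_dir. Qed.
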